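(* Let $N\ge2$, $M\ge1$, $k\ge0$. There exist constants $C_0,\dots,C_k>0$, depending only on $N,M,k$, such that for every unit vector $\psi\in\mathcal H_M$, $$\mathcal W_k(|\psi\rangle\langle\psi|)=\sum_{\ell=0}^k C_\ell\,\mathcal T^\ell\big(\gamma^{(k-\ell)}_\psi\big),$$ where here $\mathcal T^\ell$ acts on operators on $\mathcal H_{k-\ell}$ (i.e. $\mathcal T^\ell(\Gamma)=\frac{k!}{(k-\ell)!}P_{k}(I_{\mathbb C^N}^{\otimes \ell}\otimes\Gamma)P_{k}$ for $\Gamma$ on $\mathcal H_{k-\ell}$).
   Context: $\mathcal H_n=P_n(\mathbb C^N)^{\otimes n}$ is the totally symmetric subspace, $P_n$ the symmetrizing projection. On the bosonic Fock space $\bigoplus_n\mathcal H_n$, $a^*(v)\phi=\sqrt{n+1}P_{n+1}(v\otimes\phi)$ for $\phi\in\mathcal H_n$, $a(v)=a^*(v)^*$, $a_i=a(e_i)$ for an orthonormal basis $(e_i)$ of $\mathbb C^N$. $\mathcal W_k(\Gamma)=\frac1{k!}\sum_{i_1,\dots,i_k}\sum_{j_1,\dots,j_k}\mathrm{Tr}_{\mathcal H_M}(\Gamma\,a_{i_1}\cdots a_{i_k}a^*_{j_k}\cdots a^*_{j_1})\,a^*_{i_1}\cdots a^*_{i_k}a_{j_k}\cdots a_{j_1}$ restricted to $\mathcal H_k$. For a unit vector $\psi\in\mathcal H_M$ and $0\le j\le M$, the $j$-particle reduced density matrix is the operator on $\mathcal H_j$ given by $\gamma^{(j)}_\psi=\frac{M!}{(M-j)!}\mathrm{Tr}_{M-j}|\psi\rangle\langle\psi|$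 (partial trace over the last $M-j$ tensor factors), so $\mathrm{Tr}\,\gamma^{(j)}_\psi=\frac{M!}{(M-j)!}$ and $\gamma^{(0)}_\psi=1$; for $j>M$, $\gamma^{(j)}_\psi=0$. *)

(* Defs.v *)
(* Finite-dimensional bosonic Fock space over C^N, with
   complex scalars modelled by algC.  Vectors of (C^N)^{(x)n} are functions on
   words (seq 'I_N), operators are kernels seq 'I_N -> seq 'I_N -> algC; the
   tensor level n at which a kernel/vector is used is given explicitly (sums
   range over n.-tuple 'I_N, i.e. over the standard basis e_{x_1}(x)...(x)e_{x_n}). *)
From HB Require Import structures.
From mathcomp Require Import all_boot all_order all_algebra all_fingroup all_field.
Set Implicit Arguments. Unset Strict Implicit. Unset Printing Implicit Defensive.
Import Order.TTheory GRing.Theory Num.Theory.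
Local Open Scope ring_scope.

Section Fock.
Variable N : nat.

Definition vect := seq 'I_N -> algC.
Definition kern := seq 'I_N -> seq 'I_N -> algC.

Definition idk : kern := fun x y => (x == y)%:R.

Definition comp (l : nat) (A B : kern) : kern :=
  fun x z => \sum_(y : l.-tuple 'I_N) A x y * B y z.

Definition apply (n : nat) (A : kern) (phi : vect) : vect :=
  fun x => \sum_(y : n.-tuple 'I_N) A x y * phi y.

Definition tr (n : nat) (A : kern) : algC := \sum_(x : n.-tuple 'I_N) A x x.

Definition symT (n : nat) (x y : n.-tuple 'I_N) : algC :=
  (n`!%:R)^-1 * \sum_(s : 'S_n) (x == [tuple tnth y (s i) | i < n])%:R.
Definition sym (n : nat) : kern := fun x y =>
  match (insub x : option (n.-tuple 'I_N)), (insub y : option (n.-tuple 'I_N)) with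
  | Some tx, Some ty => symT tx ty
  | _, _ => 0
  end.

(* trace over the symmetric subspace H_n: Tr(P_n X P_n) *)
Definition trH (n : nat) (X : kern) : algC := tr n (comp n (sym n) (comp n X (sym n))).

Definition symH (n : nat) (phi : vect) : Prop :=
  forall x : n.-tuple 'I_N, apply n (sym n) phi x = phi x.

Definition unitH (M : nat) (psi : vect) : Prop :=
  symH M psi /\ \sum_(x : M.-tuple 'I_N) psi x * (psi x)^* = 1.

(* creation a^*_j : H_n -> H_{n+1},  phi |-> sqrt(n+1) P_{n+1}(e_j (x) phi) *)
Definition ad (j : 'I_N) (n : nat) : kern :=
  fun x y => sqrtC (n.+1)%:R * sym n.+1 x (j :: y).
Definition an (j : 'I_N) (n : nat) : kern := fun y x => (ad j n x y)^*.

(* Cr [:: j1; ..; jk] m = a^*_{jk} ... a^*_{j1} : level m -> level m+k *)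
Fixpoint Cr (js : seq 'I_N) (m : nat) : kern :=
  match js with
  | [::] => idk
  | j :: js' => comp m.+1 (Cr js' m.+1) (ad j m)
  end.
(* An [:: i1; ..; ik] m = a_{i1} ... a_{ik} : level m+k -> level m *)
Fixpoint An (ids : seq 'I_N) (m : nat) : kern :=
  match ids with
  | [::] => idk
  | i :: ids' => comp m.+1 (an i m) (An ids' m.+1)
  end.

Definition proj (psi : vect) : kern := fun x y => psi x * (psi y)^*.

Definition W (M k : nat) (G : kern) : kern := fun x y =>
  (k`!%:R)^-1 * \sum_(i : k.-tuple 'I_N) \sum_(j : k.-tuple 'I_N)
    trH M (comp M G (comp (M + k) (An i M) (Cr j M)))
    * comp 0 (Cr (rev i) 0) (An (rev j) 0) x y.

(* j-particle reduced density matrix: (M!/(M-j)!) Tr_{M-j} |psi><psi|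
   (partial trace over the last M-j factors; equals 0 when j > M) *)
Definition gamma (M j : nat) (psi : vect) : kern := fun x y =>
  (M ^_ j)%:R * \sum_(w : M.-tuple 'I_N) \sum_(z : M.-tuple 'I_N)
     ((take j w == x) && (take j z == y) && (drop j w == drop j z))%:R
     * psi w * (psi z)^*.

Definition tensI (l : nat) (G : kern) : kern := fun x y =>
  (take l x == take l y)%:R * G (drop l x) (drop l y).
Definition T (k l : nat) (G : kern) : kern :=
  fun x y => (k`!%:R / (k - l)`!%:R) * comp k (sym k) (comp k (tensI l G) (sym k)) x y.

End Fock.

(* Main.v *)
Require Import Defs.
From HB Require Import structures.
From mathcomp Require Import all_boot all_order all_algebra all_fingroup all_field.
From mathcomp Require Import zify ring.
Set Implicit Arguments. Unset Strict Implicit. Unset Printing Implicit Defensive.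
Import Order.TTheory GRing.Theory Num.Theory.
Local Open Scope ring_scope.

Section S1.
Variable N : nat.
Local Notation tp n := (n.-tuple 'I_N).

Definition pt n (y : tp n) (s : 'S_n) : tp n := [tuple tnth y (s i) | i < n].

Lemma ptM n (y : tp n) s t : pt (pt y s) t = pt y (t * s)%g.
Proof. by apply: eq_from_tnth => i; rewrite !tnth_mktuple permM. Qed.

Lemma pt1 n (y : tp n) : pt y 1%g = y.
Proof. by apply: eq_from_tnth => i; rewrite !tnth_mktuple perm1. Qed.

Lemma sym_tuple n (x y : tp n) : sym n x y = symT x y.
Proof. by rewrite /sym !valK. Qed.

Lemma symTE n (x y : tp n) :
  symT x y = (n`!%:R)^-1 * \sum_(s : 'S_n) (x == pt y s)%:R.
Proof. by []. Qed.

Lemma symT_sym n (x y : tp n) : symT x y = symT y x.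
Proof.
rewrite !symTE; congr (_ * _).
rewrite (reindex_inj invg_inj) /=; apply: eq_bigr => s _.
congr (_%:R).
case: (x =P _) => [->|nx]; first by rewrite ptM mulgV pt1 eqxx.
by case: eqP => // e; case: nx; rewrite e ptM mulVg pt1.
Qed.

Lemma symT_pt n (x y : tp n) p : symT x (pt y p) = symT x y.
Proof.
rewrite !symTE; congr (_ * _).
rewrite (reindex_inj (mulIg p^-1)%g) /=; apply: eq_bigr => s _.
by rewrite ptM -mulgA mulVg mulg1.
Qed.


Lemma symF1 n (x y : seq 'I_N) : size x != n -> sym n x y = 0.
Proof.
move=> h; rewrite /sym; case: insubP => [tx _ ex|//].
by move: h; rewrite -ex size_tuple eqxx.
Qed.

Lemma symF2 n (x y : seq 'I_N) : size y != n -> sym n x y = 0.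
Proof.
move=> h; rewrite /sym; case: insubP => [tx _ ex|//]; case: insubP => [ty _ ey|//].
by move: h; rewrite -ey size_tuple eqxx.
Qed.

Lemma pt_perm n (y : tp n) s : perm_eq (pt y s) y.
Proof. by apply/tuple_permP; exists s. Qed.

Lemma sym_perm_r n (x y y' : seq 'I_N) : perm_eq y y' -> sym n x y = sym n x y'.
Proof.
move=> pyy'.
have [sx|sx] := boolP (size x == n); last by rewrite !symF1.
have [sy|sy] := boolP (size y == n); last first.
  by rewrite !symF2 // -(perm_size pyy').
have sy' : size y' == n by rewrite -(perm_size pyy') sy.
pose tx := Tuple sx; pose ty := Tuple sy; pose ty' := Tuple sy'.
rewrite -[x]/(val tx) -[y]/(val ty) -[y']/(val ty') !sym_tuple.
have /tuple_permP [p ep] : perm_eq ty ty'.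
  by [].
have -> : ty = pt ty' p by apply: val_inj; exact: ep.
by rewrite symT_pt.
Qed.

Lemma sym_symm n (x y : seq 'I_N) : sym n x y = sym n y x.
Proof.
have [sx|sx] := boolP (size x == n); last by rewrite symF1 // symF2.
have [sy|sy] := boolP (size y == n); last by rewrite symF2 // symF1.
pose tx := Tuple sx; pose ty := Tuple sy.
by rewrite -[x]/(val tx) -[y]/(val ty) !sym_tuple symT_sym.
Qed.

Lemma sym_perm_l n (x x' y : seq 'I_N) : perm_eq x x' -> sym n x y = sym n x' y.
Proof. by move=> h; rewrite sym_symm (sym_perm_r _ _ h) sym_symm. Qed.

Definition sy n (f : seq 'I_N -> algC) :=
  forall y y', size y = n -> perm_eq y y' -> f y = f y'.

Lemma sum_pred1 n (t0 : tp n) (F : tp n -> algC) :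
  \sum_(t : tp n) (t == t0)%:R * F t = F t0.
Proof.
rewrite (bigD1 t0) //= eqxx mul1r big1 ?addr0 // => t /negbTE ->; by rewrite mul0r.
Qed.

Lemma eq_pt_inv n (x y : tp n) s : (x == pt y s) = (y == pt x s^-1).
Proof.
case: (x =P _) => [->|nx]; first by rewrite ptM mulVg pt1 eqxx.
by case: eqP => // e; case: nx; rewrite e ptM mulgV pt1.
Qed.

Lemma card_Sn_neq0 n : (n`!%:R : algC) != 0.
Proof. by rewrite pnatr_eq0 -lt0n fact_gt0. Qed.

Lemma sum_Sn_const n (c : algC) : \sum_(s : 'S_n) c = n`!%:R * c.
Proof. by rewrite sumr_const card_Sn mulr_natl. Qed.

Lemma symfix n f : sy n f -> forall x : tp n, \sum_(y : tp n) sym n x y * f y = f x.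
Proof.
move=> hf x.
under eq_bigr => y _ do rewrite sym_tuple symTE -mulrA big_distrl /=.
rewrite -big_distrr /= exchange_big /=.
under eq_bigr => s _.
  under eq_bigr => y _ do rewrite eq_pt_inv.
  rewrite sum_pred1 -(hf x (pt x s^-1)) ?size_tuple //; last first.
    by rewrite perm_sym pt_perm.
over.
by rewrite sum_Sn_const mulrA mulVf ?mul1r // card_Sn_neq0.
Qed.

Lemma symabs a n (u v : seq 'I_N) (w : tp n) :
  \sum_(t : tp n) sym (a + n) u (v ++ t) * sym n t w = sym (a + n) u (v ++ w).
Proof.
under eq_bigr => t _ do rewrite sym_tuple symT_sym symTE mulrCA big_distrr /=.
rewrite -big_distrr /= exchange_big /=.
under eq_bigr => s _.
  under eq_bigr => t _ do rewrite eq_pt_inv mulrC.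
  rewrite sum_pred1 (@sym_perm_r _ _ _ (v ++ w)); last first.
    by rewrite perm_cat2l pt_perm.
over.
by rewrite sum_Sn_const mulrA mulVf ?mul1r // card_Sn_neq0.
Qed.

End S1.

Section S2.
Variable N : nat.
Local Notation tp n := (n.-tuple 'I_N).

Definition del (T : Type) (p : nat) (u : seq T) := take p u ++ drop p.+1 u.

Definition deltuple n (p : 'I_n.+1) (u : tp n.+1) : tp n := [tuple tnth u (lift p k) | k < n].

Lemma deltupleE n p (u : tp n.+1) : val (deltuple p u) = del p u.
Proof.
have x0 := tnth u p.
have sp : (p <= size u)%N by rewrite size_tuple ltnW.
apply: (@eq_from_nth _ x0).
  by rewrite size_tuple size_cat size_take size_drop size_tuple ltn_ord; case: p sp => /= p; lia.
move=> i; rewrite size_tuple => lti.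
rewrite -[i]/(nat_of_ord (Ordinal lti)) -tnth_nth tnth_mktuple (tnth_nth x0) /= /del.
rewrite nth_cat size_take size_tuple ltn_ord /bump.
case: ltnP => hip.
  by rewrite nth_take // leqNgt hip.
rewrite nth_drop; congr nth; rewrite /=; lia.
Qed.

Lemma sum_Sn_lift n (F : 'S_n.+1 -> algC) :
  \sum_(s : 'S_n.+1) F s = \sum_(p : 'I_n.+1) \sum_(s : 'S_n) F (lift_perm ord0 p s).
Proof.
rewrite (partition_big (fun s : 'S_n.+1 => s ord0) xpredT) //=.
apply: eq_bigr => j0 _.
set i0 : 'I_n.+1 := ord0.
rewrite (reindex (lift_perm i0 j0)); last first.
  pose ulsf i (s : 'S_n.+1) k := odflt k (unlift (s i) (s (lift i k))).
  have ulsfK i (s : 'S_n.+1) k: lift (s i) (ulsf i s k) = s (lift i k).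
    rewrite /ulsf; have:= neq_lift i k.
    by rewrite -(can_eq (permK s)) => /unlift_some[] ? ? ->.
  have inj_ulsf: injective (ulsf i0 _).
    move=> s; apply: can_inj (ulsf (s i0) s^-1%g) _ => k'.
    by rewrite {1}/ulsf ulsfK !permK liftK.
  exists (fun s => perm (inj_ulsf s)) => [s _ | s].
    by apply/permP=> k'; rewrite permE /ulsf lift_perm_lift lift_perm_id liftK.
  move/(s _ =P _) => si0; apply/permP=> k.
  case: (unliftP i0 k) => [k'|] ->; rewrite ?lift_perm_id //.
  by rewrite lift_perm_lift -si0 permE ulsfK.
by apply: eq_big => [s | s _]; first by rewrite lift_perm_id eqxx.
Qed.


Lemma tnth_cons0 n (a : 'I_N) (t : tp n) : tnth (cons_tuple a t) ord0 = a.
Proof. by rewrite (tnth_nth a). Qed.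

Lemma tnth_consS n (a : 'I_N) (t : tp n) k : tnth (cons_tuple a t) (lift ord0 k) = tnth t k.
Proof. by rewrite (tnth_nth a) (tnth_nth a). Qed.

Lemma pt_lift n (u : tp n.+1) p s :
  pt u (lift_perm ord0 p s) = cons_tuple (tnth u p) (pt (deltuple p u) s).
Proof.
apply: eq_from_tnth => i; case: (unliftP ord0 i) => [k|] ->.
  by rewrite tnth_consS !tnth_mktuple lift_perm_lift.
by rewrite tnth_cons0 tnth_mktuple lift_perm_id.
Qed.

Lemma OP n (c : 'I_N) (v : seq 'I_N) (u : tp n.+1) :
  n.+1%:R * sym n.+1 (c :: v) u =
  \sum_(p : 'I_n.+1) (tnth u p == c)%:R * sym n v (del p u).
Proof.
have [sv|sv] := boolP (size v == n); last first.
  rewrite symF1 ?mulr0 /=; last by rewrite eqSS.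
  by rewrite big1 // => p _; rewrite symF1 ?mulr0.
pose tv := Tuple sv.
rewrite -[c :: v]/(val (cons_tuple c tv)) sym_tuple symTE sum_Sn_lift.
rewrite [RHS](eq_bigr (fun p : 'I_n.+1 => (tnth u p == c)%:R *
   ((n`!%:R)^-1 * \sum_(s : 'S_n) (tv == pt (deltuple p u) s)%:R))); last first.
  by move=> p _; rewrite -deltupleE -[v]/(val tv) sym_tuple symTE.
rewrite mulrA factS natrM invfM mulrA mulfV ?mul1r; last by rewrite pnatr_eq0.
rewrite big_distrr /=; apply: eq_bigr => p _.
rewrite mulrCA; congr (_ * _); rewrite big_distrr /=; apply: eq_bigr => s _.
rewrite pt_lift -natrM; congr (_%:R).
change (nat_of_bool (c :: val tv == tnth u p :: val (pt (deltuple p u) s)) =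
   ((tnth u p == c) * (tv == pt (deltuple p u) s))%N).
rewrite eqseq_cons [_ == tnth u p]eq_sym.
by case: (tnth u p == c); rewrite /= ?mul1n ?mul0n //.
Qed.


Lemma sum_tcons n (F : seq 'I_N -> algC) :
  \sum_(t : tp n.+1) F t = \sum_(c : 'I_N) \sum_(t : tp n) F (c :: t).
Proof.
rewrite pair_big /= (reindex (fun pr : 'I_N * tp n => cons_tuple pr.1 pr.2)) //=.
exists (fun t : tp n.+1 => (thead t, behead_tuple t)) => [[c t] _ | t _] /=.
  by rewrite theadE; congr pair; apply: val_inj.
by rewrite [in RHS](tuple_eta t).
Qed.

Lemma sum_tcat a b (F : seq 'I_N -> algC) :
  \sum_(t : tp (a + b)) F t = \sum_(t1 : tp a) \sum_(t2 : tp b) F (t1 ++ t2).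
Proof.
elim: a F => [|a IH] F.
  have -> : \sum_(t1 : tp 0) \sum_(t2 : tp b) F (t1 ++ t2) = \sum_(t2 : tp b) F t2.
    rewrite (big_pred1 [tuple]) // => t /=; symmetry; apply/eqP; apply: val_inj; by case: t => [[|//]].
  by [].
change (\sum_(t : tp (a + b).+1) F t = \sum_(t1 : tp a.+1) \sum_(t2 : tp b) F (t1 ++ t2)).
rewrite (sum_tcons (a+b)%N F).
rewrite (sum_tcons a (fun t => \sum_(t2 : tp b) F (t ++ t2))); apply: eq_bigr => c _.
by rewrite (IH (fun t => F (c :: t))).
Qed.

Lemma sum_tcat' n a b (F : seq 'I_N -> algC) : n = (a + b)%N ->
  \sum_(t : tp n) F t = \sum_(t1 : tp a) \sum_(t2 : tp b) F (t1 ++ t2).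
Proof. by move=> ->; apply: sum_tcat. Qed.

End S2.

Section S3.
Variable N : nat.
Local Notation tp n := (n.-tuple 'I_N).

Lemma sum_I_pred1 (c : 'I_N) (X : 'I_N -> algC) :
  \sum_(d : 'I_N) (d == c)%:R * X d = X c.
Proof.
rewrite (bigD1 c) //= eqxx mul1r big1 ?addr0 // => d /negbTE ->; by rewrite mul0r.
Qed.

Lemma del_mid p (J1 J2 : seq 'I_N) d : size J1 = p -> del p (J1 ++ d :: J2) = J1 ++ J2.
Proof.
move=> s1; rewrite /del take_cat drop_cat s1 ltnn subnn take0 cats0 ltnNge leqnSn /=.
by rewrite subSn // subnn /=; case: J2.
Qed.

Lemma nth_mid p (J1 J2 : seq 'I_N) d c : size J1 = p -> nth c (J1 ++ d :: J2) p = d.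
Proof. by move=> s1; rewrite nth_cat s1 ltnn subnn. Qed.

Lemma sum_ins k p (Phi H : seq 'I_N -> algC) c : sy k Phi -> (p < k)%N ->
  \sum_(J : tp k) (nth c J p == c)%:R * Phi J * H (del p J) =
  \sum_(J : tp k.-1) Phi (c :: J) * H J.
Proof.
move=> hP pk.
rewrite (@sum_tcat' N k p (k.-1 - p).+1
  (fun J => (nth c J p == c)%:R * Phi J * H (del p J))); last by lia.
rewrite (@sum_tcat' N k.-1 p (k.-1 - p) (fun J => Phi (c :: J) * H J)); last by lia.
apply: eq_bigr => J1 _.
rewrite (@sum_tcons N (k.-1 - p) (fun t => (nth c (J1 ++ t) p == c)%:R * Phi (J1 ++ t) * H (del p (J1 ++ t)))).
rewrite exchange_big /=; apply: eq_bigr => J2 _.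
under eq_bigr => d _ do rewrite nth_mid ?size_tuple // del_mid ?size_tuple // -mulrA.
rewrite sum_I_pred1; congr (_ * _); apply: hP.
  by rewrite size_cat /= !size_tuple; lia.
by rewrite -cat1s perm_catCA.
Qed.


Lemma OPs n c (v u : seq 'I_N) : size u = n.+1 ->
  n.+1%:R * sym n.+1 (c :: v) u =
  \sum_(0 <= p < n.+1) (nth c u p == c)%:R * sym n v (del p u).
Proof.
move=> su; have su' : size u == n.+1 by rewrite su.
rewrite -[u]/(val (Tuple su')) OP big_mkord; apply: eq_bigr => p _.
by rewrite (tnth_nth c).
Qed.

Lemma del_catl p (J z : seq 'I_N) : (p < size J)%N -> del p (J ++ z) = del p J ++ z.
Proof.
move=> h; rewrite /del take_cat h -catA; congr (_ ++ _).
rewrite drop_cat; case: ltnP => // h2.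
have e : size J = p.+1 by apply/eqP; rewrite eqn_leq h h2.
by rewrite e subnn drop0 drop_oversize ?e.
Qed.

Lemma del_catr q (J z : seq 'I_N) : del (size J + q) (J ++ z) = J ++ del q z.
Proof.
rewrite /del take_cat drop_cat ltnNge leq_addr /= -addnS ltnNge leq_addr /=.
by rewrite !addKn catA.
Qed.

Lemma sum_constK (x : algC) k : x *+ k = \sum_(0 <= i < k) x.
Proof. by rewrite sumr_const_nat subn0. Qed.

Lemma sum2_split (I J : finType) (F G : I -> J -> algC) :
  \sum_i \sum_j (F i j + G i j) = \sum_i \sum_j F i j + \sum_i \sum_j G i j.
Proof. by rewrite -big_split; apply: eq_bigr => i _; rewrite big_split. Qed.

Definition SP k M (Phi psi : seq 'I_N -> algC) (v : seq 'I_N) :=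
  \sum_(J : tp k) \sum_(z : tp M) sym (k + M) v (J ++ z) * Phi J * psi z.

Lemma DR k M Phi psi c v : sy k Phi -> sy M psi ->
  (k + M)%:R * SP k M Phi psi (c :: v) =
  k%:R * SP k.-1 M (fun J => Phi (c :: J)) psi v +
  M%:R * SP k M.-1 Phi (fun z => psi (c :: z)) v.
Proof.
move=> hP hp.
have [e0|ne0] := eqVneq (k + M)%N 0%N.
  by move: e0 => /eqP; rewrite addn_eq0 => /andP [/eqP -> /eqP ->]; rewrite !mul0r addr0.
set n := (k + M).-1.
have en : (k + M)%N = n.+1 by rewrite /n prednK // lt0n.
rewrite /SP !big_distrr /=.
transitivity (\sum_(J : tp k) \sum_(z : tp M)
   ((\sum_(0 <= p < k) (nth c J p == c)%:R * sym n v (del p J ++ z)) * Phi J * psi z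
  + (\sum_(0 <= q < M) (nth c z q == c)%:R * sym n v (J ++ del q z)) * Phi J * psi z)).
  apply: eq_bigr => J _; rewrite big_distrr /=; apply: eq_bigr => z _.
  rewrite -!mulrDl !mulrA; congr (_ * _ * _); rewrite en OPs; last by rewrite size_cat !size_tuple.
  rewrite -en (big_cat_nat _ (leq_addr M k)) //=.
  congr (_ + _).
    rewrite big_nat_cond [RHS]big_nat_cond; apply: eq_bigr => p /andP [/andP [_ pk] _].
    by rewrite nth_cat size_tuple pk del_catl // size_tuple.
  rewrite -{1}[k]add0n big_addn addKn; apply: eq_bigr => q _.
  rewrite nth_cat size_tuple ltnNge leq_addl /= addnK.
  by rewrite (_ : (q + k)%N = size J + q) ?del_catr // size_tuple addnC.
rewrite sum2_split; congr (_ + _).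
  rewrite -big_distrr /= mulr_natl sum_constK.
  under eq_bigr => J _ do under eq_bigr => z _ do rewrite !big_distrl /=.
  under eq_bigr => J _ do rewrite exchange_big /=.
  rewrite exchange_big /= big_nat_cond [RHS]big_nat_cond.
  apply: eq_bigr => p; rewrite andbT => /andP [_ pk].
  have -> : n = (k.-1 + M)%N by rewrite /n; case: (k) pk => [//|k'] _; rewrite addSn.
  rewrite exchange_big [RHS]exchange_big /=; apply: eq_bigr => z _.
  transitivity ((\sum_(J : tp k) (nth c J p == c)%:R * Phi J *
     (fun J' => sym (k.-1 + M) v (J' ++ z)) (del p J)) * psi z).
    by rewrite big_distrl; apply: eq_bigr => J _ /=; ring.
  rewrite (@sum_ins k p Phi (fun J => sym (k.-1 + M) v (J ++ z)) c hP pk) big_distrl.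
  by apply: eq_bigr => J _ /=; ring.
rewrite -big_distrr /= mulr_natl sum_constK.
under eq_bigr => J _ do under eq_bigr => z _ do rewrite !big_distrl /=.
under eq_bigr => J _ do rewrite exchange_big /=.
rewrite exchange_big /= big_nat_cond [RHS]big_nat_cond.
apply: eq_bigr => q; rewrite andbT => /andP [_ qM].
have -> : n = (k + M.-1)%N by rewrite /n; case: (M) qM => [//|M'] _; rewrite addnS.
apply: eq_bigr => J _.
transitivity ((\sum_(z : tp M) (nth c z q == c)%:R * psi z *
   (fun z' => sym (k + M.-1) v (J ++ z')) (del q z)) * Phi J).
  by rewrite big_distrl; apply: eq_bigr => z _ /=; ring.
rewrite (@sum_ins M q psi (fun z => sym (k + M.-1) v (J ++ z)) c hp qM) big_distrl.
by apply: eq_bigr => z _ /=; ring.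
Qed.

End S3.

Section S4.
Variable N : nat.
Local Notation tp n := (n.-tuple 'I_N).

Lemma eq_tp a b (F : seq 'I_N -> algC) : a = b ->
  \sum_(t : tp a) F t = \sum_(t : tp b) F t.
Proof. by move=> ->. Qed.

Lemma sy_cons n (f : seq 'I_N -> algC) c : sy n.+1 f -> sy n (fun t => f (c :: t)).
Proof. by move=> h y y' sy pyy'; apply: h; rewrite /= ?sy // perm_cons. Qed.

Definition S4 p q k (eps chi Phi psi : seq 'I_N -> algC) l :=
  \sum_(a1 : tp l) \sum_(a2 : tp (p - l)) \sum_(b1 : tp (k - l)) \sum_(b2 : tp (q - (k - l)))
    eps (a1 ++ a2) * chi (b1 ++ b2) * Phi (a1 ++ b1) * psi (a2 ++ b2).

Lemma FIN0 q k M (eps chi Phi psi : seq 'I_N -> algC) : (0 + q = k + M)%N ->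
  sy q chi ->
  'C(k + M, k)%:R * \sum_(I : tp 0) \sum_(w : tp q) eps I * chi w * SP k M Phi psi (I ++ w) =
  \sum_(l < k.+1) ('C(0, l) * 'C(q, k - l))%:R * S4 0 q k eps chi Phi psi l.
Proof.
rewrite add0n => -> hchi.
rewrite [RHS]big_ord_recl [X in _ = _ + X]big1 ?addr0; last first.
  by move=> i _; rewrite bin0n /= mul0r.
rewrite bin0 mul1n subn0 /S4 ?subn0 ?addKn.
rewrite (big_pred1 [tuple]); last by move=> t /=; symmetry; apply/eqP; apply: val_inj; case: t => [[|//]].
rewrite (big_pred1 [tuple]); last by move=> t /=; symmetry; apply/eqP; apply: val_inj; case: t => [[|//]].
rewrite (big_pred1 [tuple]); last by move=> t /=; symmetry; apply/eqP; apply: val_inj; case: t => [[|//]].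
congr (_ * _); rewrite /SP /=.
under eq_bigr => w _ do rewrite big_distrr /=.
rewrite exchange_big /=; apply: eq_bigr => J _.
under eq_bigr => w _ do rewrite big_distrr /=.
rewrite exchange_big /=; apply: eq_bigr => z _.
transitivity (eps [::] * Phi J * psi z * \sum_(w : tp (k + M)) sym (k + M) (J ++ z) w * chi w).
  by rewrite big_distrr /=; apply: eq_bigr => w _; rewrite sym_symm; ring.
by rewrite (symfix hchi (cat_tuple J z)) /=; ring.
Qed.


Lemma coefA k' M : ('C(k'.+1 + M, k'.+1) * k'.+1 = (k'.+1 + M) * 'C(k' + M, k'))%N.
Proof. by rewrite mul_bin_diag mulnC. Qed.

Lemma coefB k M' : ('C(k + M'.+1, k) * M'.+1 = (k + M'.+1) * 'C(k + M', k))%N.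
Proof. have := mul_bin_down (k + M'.+1) k; rewrite addnS /= -addnS addKn => ->; exact: mulnC. Qed.

Lemma S4A p q k' (eps chi Phi psi : seq 'I_N -> algC) l :
  \sum_(c : 'I_N) S4 p q k' (fun t => eps (c :: t)) chi (fun t => Phi (c :: t)) psi l =
  S4 p.+1 q k'.+1 eps chi Phi psi l.+1.
Proof.
rewrite [RHS]/S4 (@sum_tcons N l (fun a1 => \sum_(a2 : tp (p.+1 - l.+1))
   \sum_(b1 : tp (k'.+1 - l.+1)) \sum_(b2 : tp (q - (k'.+1 - l.+1)))
    eps (a1 ++ a2) * chi (b1 ++ b2) * Phi (a1 ++ b1) * psi (a2 ++ b2))).
by [].
Qed.

Lemma S4B p q k (eps chi Phi psi : seq 'I_N -> algC) l : sy p.+1 eps -> (l <= p)%N ->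
  \sum_(c : 'I_N) S4 p q k (fun t => eps (c :: t)) chi Phi (fun t => psi (c :: t)) l =
  S4 p.+1 q k eps chi Phi psi l.
Proof.
move=> he lp; rewrite /S4 exchange_big /=; apply: eq_bigr => a1 _.
set F := (fun a2 : seq 'I_N => \sum_(b1 : tp (k - l)) \sum_(b2 : tp (q - (k - l)))
    eps (a1 ++ a2) * chi (b1 ++ b2) * Phi (a1 ++ b1) * psi (a2 ++ b2)).
rewrite (@eq_tp (p.+1 - l) (p - l).+1 F); last by rewrite subSn.
rewrite (@sum_tcons N (p - l) F) /F.
apply: eq_bigr => c _; apply: eq_bigr => a2 _; apply: eq_bigr => b1 _; apply: eq_bigr => b2 _.
congr (_ * _ * _ * _); apply: he; first by rewrite /= size_cat !size_tuple; lia.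
by rewrite -cat1s perm_catCA.
Qed.

Lemma FIN p : forall q k M (eps chi Phi psi : seq 'I_N -> algC), (p + q = k + M)%N ->
  sy p eps -> sy q chi -> sy k Phi -> sy M psi ->
  'C(k + M, k)%:R * \sum_(I : tp p) \sum_(w : tp q) eps I * chi w * SP k M Phi psi (I ++ w) =
  \sum_(l < k.+1) ('C(p, l) * 'C(q, k - l))%:R * S4 p q k eps chi Phi psi l.
Proof.
elim: p => [|p IH] q k M eps chi Phi psi hpq he hc hP hp; first exact: FIN0.
pose cA : algC := if k is k'.+1 then 'C(k' + M, k')%:R else 0.
pose cB : algC := if M is M'.+1 then 'C(k + M', k)%:R else 0.
pose XA c := \sum_(I : tp p) \sum_(w : tp q) eps (c :: I) * chi w *
   SP k.-1 M (fun J => Phi (c :: J)) psi (I ++ w).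
pose XB c := \sum_(I : tp p) \sum_(w : tp q) eps (c :: I) * chi w *
   SP k M.-1 Phi (fun z => psi (c :: z)) (I ++ w).
have nz : (k + M)%:R != 0 :> algC by rewrite pnatr_eq0; lia.
have step : 'C(k + M, k)%:R * \sum_(I : tp p.+1) \sum_(w : tp q) eps I * chi w * SP k M Phi psi (I ++ w)
   = \sum_(c : 'I_N) (cA * XA c + cB * XB c).
  apply: (mulfI nz).
  transitivity ('C(k + M, k)%:R * \sum_(c : 'I_N) (k%:R * XA c + M%:R * XB c)).
    rewrite (@sum_tcons N p (fun I => \sum_(w : tp q) eps I * chi w * SP k M Phi psi (I ++ w))).
    rewrite mulrCA; congr (_ * _).
    rewrite big_distrr /=; apply: eq_bigr => c _.
    rewrite /XA /XB !big_distrr -big_split /=; apply: eq_bigr => I _.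
    rewrite !big_distrr -big_split /=; apply: eq_bigr => w _.
    transitivity (eps (c :: I) * chi w * ((k + M)%:R * SP k M Phi psi (c :: (I ++ w)))).
      by rewrite /=; ring.
    by rewrite DR //; ring.
  rewrite !big_distrr /=; apply: eq_bigr => c _.
  rewrite !mulrDr !mulrA; congr (_ * _ + _ * _).
    rewrite /cA; case: (k) => [|k']; first by rewrite !mulr0.
    by rewrite -!natrM coefA.
  rewrite /cB; case: (M) => [|M']; first by rewrite !mulr0.
  by rewrite -!natrM coefB.
rewrite step big_split /=.
have -> : \sum_(l < k.+1) ('C(p.+1, l) * 'C(q, k - l))%:R * S4 p.+1 q k eps chi Phi psi l =
   \sum_(l < k) ('C(p, l) * 'C(q, k - l.+1))%:R * S4 p.+1 q k eps chi Phi psi l.+1 +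
   \sum_(l < k.+1) ('C(p, l) * 'C(q, k - l))%:R * S4 p.+1 q k eps chi Phi psi l.
  rewrite big_ord_recl [X in _ = _ + X]big_ord_recl /= !bin0 addrCA; congr (_ + _).
  rewrite -big_split /=; apply: eq_bigr => i _.
  by rewrite /bump /= binS mulnDl natrD mulrDl addrC.
congr (_ + _).
  rewrite /cA /XA; clear step XB cB XA cA nz; case: k hpq hP => [|k'] hpq hP.
    by rewrite big_ord0 big1 // => c _; rewrite mul0r.
  transitivity (\sum_(c : 'I_N) \sum_(l < k'.+1) ('C(p, l) * 'C(q, k' - l))%:R *
      S4 p q k' (fun t => eps (c :: t)) chi (fun t => Phi (c :: t)) psi l).
    apply: eq_bigr => c _; rewrite /=.
    apply: (IH q k' M (fun t => eps (c :: t)) chi (fun t => Phi (c :: t)) psi).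
    - by move: hpq; rewrite !addSn => -[].
    - exact: sy_cons.
    - exact: hc.
    - exact: sy_cons.
    - exact: hp.
  rewrite exchange_big /=; apply: eq_bigr => l _.
  by rewrite -big_distrr /= S4A subSS.
rewrite /cB /XB; clear step XB cB XA cA nz; case: M hpq hp => [|M'] hpq hp.
  rewrite big1; last by move=> c _; rewrite mul0r.
  rewrite big1 // => l _.
  have : (p < l)%N || (q < k - l)%N by lia.
  by case/orP => h; rewrite (bin_small h) ?muln0 ?mul0n mul0r.
transitivity (\sum_(c : 'I_N) \sum_(l < k.+1) ('C(p, l) * 'C(q, k - l))%:R *
    S4 p q k (fun t => eps (c :: t)) chi Phi (fun t => psi (c :: t)) l).
  apply: eq_bigr => c _; rewrite /=.
  apply: (IH q k M' (fun t => eps (c :: t)) chi Phi (fun t => psi (c :: t))).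
  - by move: hpq; rewrite addnS addSn => -[].
  - exact: sy_cons.
  - exact: hc.
  - exact: hP.
  - exact: sy_cons.
rewrite exchange_big /=; apply: eq_bigr => l _.
rewrite -big_distrr /=.
have [lp|pl] := leqP l p; first by rewrite S4B.
by rewrite (bin_small pl) mul0n !mul0r.
Qed.

End S4.

Section S5.
Variable N : nat.
Local Notation tp n := (n.-tuple 'I_N).

Lemma symH_sy n (f : vect N) : symH n f -> sy n f.
Proof.
move=> h y y' sy pyy'.
have sy1 : size y == n by rewrite sy.
have sy2 : size y' == n by rewrite -(perm_size pyy') sy.
rewrite -[y]/(val (Tuple sy1)) -[y']/(val (Tuple sy2)) -!h.
by apply: eq_bigr => t _; rewrite (@sym_perm_l _ _ y y').
Qed.

Lemma sym_conj n (x y : seq 'I_N) : (sym n x y)^* = sym n x y.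
Proof.
rewrite /sym; case: insubP => [tx _ _|]; last by rewrite conjC0.
case: insubP => [ty _ _|]; last by rewrite conjC0.
rewrite symTE rmorphM fmorphV /= conjC_nat rmorph_sum /=; congr (_ * _).
by apply: eq_bigr => s _; rewrite conjC_nat.
Qed.

Lemma An_conj (I : seq 'I_N) m w u : An I m w u = (Cr I m u w)^*.
Proof.
elim: I m w u => [|i I IH] m w u /=.
  by rewrite /idk conjC_nat eq_sym.
rewrite /Defs.comp rmorph_sum /=; apply: eq_bigr => y _.
by rewrite rmorphM /= IH /an mulrC.
Qed.

Fixpoint cc (m k : nat) : algC :=
  if k is k'.+1 then sqrtC (m.+1)%:R * cc m.+1 k' else 1.

Lemma cc_conj m k : (cc m k)^* = cc m k.
Proof.
elim: k m => [|k IH] m /=; first by rewrite conjC1.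
rewrite rmorphM /= IH; congr (_ * _); apply: conj_Creal; apply: ger0_real.
by rewrite sqrtC_ge0 ler0n.
Qed.

Lemma cc_sq m k : cc m k * cc m k * (m`!)%:R = ((m + k)`!)%:R.
Proof.
elim: k m => [|k IH] m /=; first by rewrite !mul1r addn0.
have -> : cc m k.+1 * cc m k.+1 * (m`!)%:R =
   (sqrtC (m.+1)%:R) ^+ 2 * (cc m.+1 k * cc m.+1 k * (m`!)%:R) by rewrite /=; ring.
by rewrite sqrtCK mulrCA -natrM -factS IH addSnnS.
Qed.

Lemma CRF (J : seq 'I_N) : forall m (f : seq 'I_N -> algC) (u : seq 'I_N), sy m f ->
  apply m (Cr J m) f u = cc m (size J) * \sum_(z : tp m) sym (m + size J) u (J ++ z) * f z.
Proof.
elim: J => [|j J IH] m f u hf /=.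
  rewrite mul1r addn0.
  have [su|su] := boolP (size u == m).
    rewrite -[u]/(val (Tuple su)) (symfix hf) /apply /idk.
    rewrite (bigD1 (Tuple su)) //= eqxx mul1r big1 ?addr0 // => y ny.
    have -> : (u == val y) = false by apply/negbTE; rewrite eq_sym.
    by rewrite mul0r.
  rewrite /apply big1; last first.
    move=> y _; rewrite /idk; case: eqP => [e|]; rewrite ?mul0r //.
    by move: su; rewrite e size_tuple eqxx.
  by rewrite big1 // => z _; rewrite symF1 ?mul0r.
pose g t := \sum_(y : tp m) ad j m t y * f y.
have hg : sy m.+1 g.
  move=> t t' st ptt'; rewrite /g; apply: eq_bigr => y _; congr (_ * _).
  by rewrite /ad (@sym_perm_l _ _ t t').
transitivity (apply m.+1 (Cr J m.+1) g u).
  rewrite /apply /g /Defs.comp.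
  under eq_bigr => y _ do rewrite big_distrl /=.
  rewrite exchange_big /=; apply: eq_bigr => t _.
  by rewrite big_distrr /=; apply: eq_bigr => y _; rewrite mulrA.
rewrite (IH m.+1 g u hg).
have -> : \sum_(t : tp m.+1) sym (m.+1 + size J) u (J ++ t) * g t =
    sqrtC (m.+1)%:R * \sum_(z : tp m) sym (m + (size J).+1) u (j :: J ++ z) * f z.
  rewrite /g.
  under eq_bigr => t _ do rewrite big_distrr /=.
  rewrite exchange_big big_distrr /=; apply: eq_bigr => y _.
  transitivity (sqrtC (m.+1)%:R * f y *
     \sum_(t : tp m.+1) sym (size J + m.+1) u (J ++ t) * sym m.+1 t (j :: y)).
    rewrite big_distrr /=; apply: eq_bigr => t _; rewrite /ad addnC; ring.
  rewrite (@symabs N (size J) m.+1 u J (cons_tuple j y)) /=.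
  rewrite !addnS addnC (@sym_perm_r _ _ _ (J ++ j :: y) (j :: J ++ y)); first by ring.
  by rewrite -cat1s perm_catCA.
by ring.
Qed.


Lemma symH_eq n (f : vect N) : symH n f ->
  forall x : tp n, \sum_(y : tp n) sym n x y * f y = f x.
Proof. by move=> h x; exact: h. Qed.

Lemma trH_proj M (psi : vect N) (B : kern N) : symH M psi ->
  trH M (Defs.comp M (proj psi) B) =
  \sum_(w : tp M) \sum_(z : tp M) (psi w)^* * B w z * psi z.
Proof.
move=> h.
pose Y (c : seq 'I_N) := \sum_(w : tp M) (psi w)^* * B w c.
rewrite /trH /tr /Defs.comp /proj.
transitivity (\sum_(a : tp M) \sum_(c : tp M)
   (\sum_(b : tp M) sym M a b * psi b) * Y c * sym M c a).
  apply: eq_bigr => a _.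
  under eq_bigr => b _ do rewrite big_distrr /=.
  rewrite exchange_big /=; apply: eq_bigr => c _.
  rewrite /Y big_distrl big_distrl /=; apply: eq_bigr => b _.
  rewrite !big_distrl !big_distrr !big_distrl /=; apply: eq_bigr => w _; ring.
under eq_bigr => a _ do under eq_bigr => c _ do rewrite (symH_eq h).
rewrite exchange_big /=.
transitivity (\sum_(c : tp M) Y c * \sum_(a : tp M) sym M c a * psi a).
  by apply: eq_bigr => c _; rewrite big_distrr /=; apply: eq_bigr => a _; ring.
transitivity (\sum_(c : tp M) Y c * psi c).
  by apply: eq_bigr => c _; rewrite (symH_eq h).
rewrite /Y (eq_bigr (fun c : tp M => \sum_(w : tp M) (psi w)^* * B w c * psi c)); last first.
  by move=> c _; rewrite big_distrl.
by rewrite exchange_big.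
Qed.


Lemma symidem n (x y : seq 'I_N) :
  \sum_(t : tp n) sym n x t * sym n t y = sym n x y.
Proof.
have [sy|sy] := boolP (size y == n).
  by rewrite -[y]/(val (Tuple sy)) (@symabs N 0 n x [::] (Tuple sy)).
by rewrite [RHS]symF2 // big1 // => t _; rewrite [sym n t y]symF2 ?mulr0.
Qed.

Lemma sum_tp0 (F : seq 'I_N -> algC) : \sum_(t : tp 0) F t = F [::].
Proof.
rewrite (big_pred1 [tuple]) // => t /=; symmetry; apply/eqP; apply: val_inj.
by case: t => [[|//]].
Qed.

Lemma tr_eq M k (psi : vect N) (i j : tp k) : symH M psi ->
  trH M (Defs.comp M (proj psi) (Defs.comp (M + k) (An i M) (Cr j M))) =
  cc M k * cc M k * \sum_(w : tp M) \sum_(z : tp M)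
     (psi w)^* * psi z * sym (M + k) (i ++ w) (j ++ z).
Proof.
move=> h; have hs := symH_sy h.
rewrite trH_proj //.
transitivity (\sum_(u : tp (M + k)) (apply M (Cr i M) psi u)^* * apply M (Cr j M) psi u).
  rewrite /Defs.comp.
  transitivity (\sum_(w : tp M) \sum_(z : tp M) \sum_(u : tp (M + k))
     (psi w)^* * An i M w u * (Cr j M u z * psi z)).
    apply: eq_bigr => w _; apply: eq_bigr => z _.
    by rewrite big_distrr big_distrl /=; apply: eq_bigr => u _; ring.
  under eq_bigr => w _ do rewrite exchange_big /=.
  rewrite exchange_big /=; apply: eq_bigr => u _.
  rewrite /apply rmorph_sum /= big_distrl /=; apply: eq_bigr => w _.
  rewrite big_distrr /=; apply: eq_bigr => z _.
  by rewrite An_conj rmorphM /=; ring.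
transitivity (\sum_(u : tp (M + k)) cc M k * cc M k * \sum_(w : tp M) \sum_(z : tp M)
     (psi w)^* * psi z * (sym (M + k) (i ++ w) u * sym (M + k) u (j ++ z))).
  apply: eq_bigr => u _.
  rewrite !CRF // !size_tuple rmorphM /= cc_conj rmorph_sum /=.
  rewrite -!mulrA; congr (_ * _); rewrite mulrCA; congr (_ * _).
  rewrite big_distrl /=; apply: eq_bigr => w _.
  rewrite big_distrr /=; apply: eq_bigr => z _.
  by rewrite rmorphM /= sym_conj (sym_symm _ u); ring.
rewrite -big_distrr /=; congr (_ * _).
rewrite exchange_big /=; apply: eq_bigr => w _.
rewrite exchange_big /=; apply: eq_bigr => z _.
by rewrite -big_distrr /= symidem.
Qed.


Lemma Cr0 (J : seq 'I_N) u : Cr J 0 u [::] = cc 0 (size J) * sym (size J) u J.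
Proof.
have := @CRF J 0 (fun _ => 1) u.
rewrite /apply (sum_tp0 (fun t => Cr J 0 u t * 1)).
rewrite (sum_tp0 (fun t => sym (0 + size J) u (J ++ t) * 1)) cats0 add0n !mulr1 => ->; last by [].
by [].
Qed.

Lemma K_eq k (i j : tp k) x y :
  Defs.comp 0 (Cr (rev i) 0) (An (rev j) 0) x y = cc 0 k * cc 0 k * sym k x i * sym k y j.
Proof.
rewrite /Defs.comp (sum_tp0 (fun t => Cr (rev i) 0 x t * An (rev j) 0 t y)) An_conj !Cr0 !size_rev !size_tuple rmorphM /= cc_conj sym_conj.
rewrite (@sym_perm_r N k x (rev i) i) ?perm_rev // (@sym_perm_r N k y (rev j) j) ?perm_rev //.
ring.
Qed.


Lemma sy_sym k (x : seq 'I_N) : sy k (sym k x).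
Proof. by move=> y y' _ p; apply: sym_perm_r. Qed.

Lemma sy_conj n (f : seq 'I_N -> algC) : sy n f -> sy n (fun w => (f w)^*).
Proof. by move=> h y y' s p; rewrite (h y y'). Qed.

Lemma ccM2 M k : cc M k * cc M k = (k`!)%:R * ('C(k + M, k))%:R.
Proof.
have h := cc_sq M k.
have nz : (M`!)%:R != 0 :> algC by rewrite pnatr_eq0 -lt0n fact_gt0.
apply: (mulIf nz); rewrite h -!natrM; congr (_%:R).
by rewrite addnC -(bin_fact (leq_addr M k)) addKn; ring.
Qed.

Lemma LHS_eq M k (psi phi : vect N) (x : tp k) : symH M psi -> symH k phi ->
  apply k (W M k (proj psi)) phi x =
  (k`!)%:R * \sum_(l < k.+1) ('C(k, l) * 'C(M, k - l))%:R *
    S4 k M k (sym k x) (fun w => (psi w)^*) phi psi l.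
Proof.
move=> hpsi hphi.
have spsi := symH_sy hpsi; have sphi := symH_sy hphi.
rewrite -(FIN (erefl (k + M)%N) (@sy_sym k x) (sy_conj spsi) sphi spsi).
pose T (i j : tp k) := trH M (Defs.comp M (proj psi) (Defs.comp (M + k) (An i M) (Cr j M))).
transitivity (\sum_(i : tp k) \sum_(j : tp k) T i j * sym k x i * phi j).
  rewrite /apply /W.
  transitivity (\sum_(y : tp k) \sum_(i : tp k) \sum_(j : tp k)
     ((k`!)%:R^-1 * (cc 0 k * cc 0 k)) * (T i j * sym k x i) * (sym k y j * phi y)).
    apply: eq_bigr => y _; rewrite big_distrr big_distrl /=; apply: eq_bigr => i _.
    rewrite big_distrr big_distrl /=; apply: eq_bigr => j _; rewrite K_eq /T; ring.
  have -> : (k`!)%:R^-1 * (cc 0 k * cc 0 k) = 1 :> algC.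
    have := cc_sq 0 k; rewrite mulr1 add0n => ->.
    by rewrite mulVf // pnatr_eq0 -lt0n fact_gt0.
  rewrite exchange_big /=; apply: eq_bigr => i _.
  rewrite exchange_big /=; apply: eq_bigr => j _.
  rewrite -big_distrr /= mul1r.
  have -> : \sum_(y : tp k) sym k y j * phi y = phi j.
    by rewrite -[RHS](symH_eq hphi j); apply: eq_bigr => y _; rewrite sym_symm.
  by [].
rewrite /T.
under eq_bigr => i _ do under eq_bigr => j _ do rewrite tr_eq // ccM2.
rewrite mulrA big_distrr /=; apply: eq_bigr => i _.
rewrite /SP.
transitivity (\sum_(j : tp k) \sum_(w : tp M) \sum_(z : tp M) (k`!)%:R * 'C(k + M, k)%:R *
   (sym k x i * (psi w)^* * (sym (k + M) (i ++ w) (j ++ z) * phi j * psi z))).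
  apply: eq_bigr => j _.
  set S := (\sum_(w : tp M) \sum_(z : tp M) (psi w)^* * psi z * sym (M + k) (i ++ w) (j ++ z)).
  transitivity ((k`!)%:R * 'C(k + M, k)%:R * (S * (sym k x i * phi j))); first by ring.
  rewrite /S big_distrl big_distrr /=; apply: eq_bigr => w _.
  rewrite big_distrl big_distrr /=; apply: eq_bigr => z _.
  rewrite [(M + k)%N]addnC; ring.
rewrite exchange_big /= big_distrr /=; apply: eq_bigr => w _.
rewrite mulrA big_distrr /=; apply: eq_bigr => j _.
by rewrite big_distrr /=; apply: eq_bigr => z _; ring.
Qed.

End S5.

Section S6.
Variable N : nat.
Local Notation tp n := (n.-tuple 'I_N).

Lemma sum_pred1v n (t0 : tp n) (F : seq 'I_N -> algC) :
  \sum_(t : tp n) (tval t == tval t0)%:R * F t = F t0.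
Proof. exact: (@sum_pred1 N n t0 (fun t => F t)). Qed.

Lemma nat_and3 (a b c : bool) : ((a && b) && c)%:R = a%:R * b%:R * c%:R :> algC.
Proof. by case: a; case: b; case: c; rewrite /= ?mul1r ?mul0r ?mulr0. Qed.

Lemma gamma_eq M j (psi : vect N) (u v : tp j) : (j <= M)%N ->
  gamma M j psi u v = (M ^_ j)%:R * \sum_(r : tp (M - j)) psi (u ++ r) * (psi (v ++ r))^*.
Proof.
move=> jM; rewrite /gamma; congr (_ * _).
rewrite (@sum_tcat' N M j (M - j) (fun w => \sum_(z : tp M)
   ((take j w == u) && (take j z == v) && (drop j w == drop j z))%:R * psi w * (psi z)^*));
   last by rewrite subnKC.
transitivity (\sum_(w1 : tp j) (tval w1 == tval u)%:R *
   (\sum_(w2 : tp (M - j)) \sum_(z : tp M)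
     ((take j z == v) && (tval w2 == drop j z))%:R * psi (w1 ++ w2) * (psi z)^*)).
  apply: eq_bigr => w1 _; rewrite big_distrr /=; apply: eq_bigr => w2 _.
  rewrite big_distrr /=; apply: eq_bigr => z _.
  rewrite take_size_cat ?size_tuple // drop_size_cat ?size_tuple // !nat_and3.
  by case: (tval w1 == tval u); case: (take j (tval z) == tval v); case: (tval w2 == drop j (tval z)); rewrite /= ?mul1r ?mul0r ?mulr0.
rewrite (@sum_pred1v j u (fun w1 => \sum_(w2 : tp (M - j)) \sum_(z : tp M)
     ((take j z == v) && (tval w2 == drop j z))%:R * psi (w1 ++ w2) * (psi z)^*)).
apply: eq_bigr => w2 _.
rewrite (@sum_tcat' N M j (M - j) (fun z => ((take j z == v) && (tval w2 == drop j z))%:R *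
   psi (u ++ w2) * (psi z)^*)); last by rewrite subnKC.
transitivity (\sum_(z1 : tp j) (tval z1 == tval v)%:R * (\sum_(z2 : tp (M - j))
    (tval z2 == tval w2)%:R * (psi (u ++ w2) * (psi (z1 ++ z2))^*))).
  apply: eq_bigr => z1 _; rewrite big_distrr /=; apply: eq_bigr => z2 _.
  rewrite take_size_cat ?size_tuple // drop_size_cat ?size_tuple //.
  rewrite [tval w2 == _]eq_sym.
  by case: (tval z1 == tval v); case: (tval z2 == tval w2); rewrite /= ?mul1r ?mul0r.
rewrite (@sum_pred1v j v (fun z1 => \sum_(z2 : tp (M - j))
    (tval z2 == tval w2)%:R * (psi (u ++ w2) * (psi (z1 ++ z2))^*))).
by rewrite (@sum_pred1v (M - j) w2 (fun z2 => psi (u ++ w2) * (psi (v ++ z2))^*)).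
Qed.


Lemma KEY M k l (psi phi : vect N) (x : tp k) : (l <= k)%N ->
  \sum_(a : tp k) \sum_(b : tp k) sym k x a * tensI l (gamma M (k - l) psi) a b * phi b =
  (M ^_ (k - l))%:R * S4 k M k (sym k x) (fun w => (psi w)^*) phi psi l.
Proof.
move=> lk.
have [jM|Mj] := leqP (k - l) M; last first.
  rewrite ffact_small // mul0r big1 // => a _; rewrite big1 // => b _.
  by rewrite /tensI /gamma ffact_small // mulr0n mul0r mulr0 mulr0 mul0r.
rewrite (@sum_tcat' N k l (k - l) (fun a => \sum_(b : tp k)
   sym k x a * tensI l (gamma M (k - l) psi) a b * phi b)); last by rewrite subnKC.
rewrite /S4 big_distrr /=; apply: eq_bigr => a1 _.
rewrite big_distrr /=; apply: eq_bigr => a2 _.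
rewrite (@sum_tcat' N k l (k - l) (fun b =>
   sym k x (a1 ++ a2) * tensI l (gamma M (k - l) psi) (a1 ++ a2) b * phi b)); last by rewrite subnKC.
transitivity (\sum_(b1 : tp l) (tval b1 == tval a1)%:R * \sum_(b2 : tp (k - l))
    sym k x (a1 ++ a2) * gamma M (k - l) psi a2 b2 * phi (b1 ++ b2)).
  apply: eq_bigr => b1 _; rewrite big_distrr /=; apply: eq_bigr => b2 _.
  rewrite /tensI !take_size_cat ?size_tuple // !drop_size_cat ?size_tuple // eq_sym.
  by rewrite /=; ring.
rewrite (@sum_pred1v l a1 (fun b1 => \sum_(b2 : tp (k - l))
    sym k x (a1 ++ a2) * gamma M (k - l) psi a2 b2 * phi (b1 ++ b2))).
rewrite big_distrr /=; apply: eq_bigr => b2 _.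
rewrite gamma_eq //.
set R := \sum_(r : tp (M - (k - l))) _.
transitivity ((M ^_ (k - l))%:R * (sym k x (a1 ++ a2) * phi (a1 ++ b2) * R)); first by ring.
congr (_ * _); rewrite /R big_distrr /=; apply: eq_bigr => r _; ring.
Qed.


Lemma RHS_eq M k (psi phi : vect N) (x : tp k) : symH k phi ->
  apply k (fun u v => \sum_(l < k.+1) 'C(k, l)%:R * T k l (gamma M (k - l) psi) u v) phi x =
  (k`!)%:R * \sum_(l < k.+1) ('C(k, l) * 'C(M, k - l))%:R *
    S4 k M k (sym k x) (fun w => (psi w)^*) phi psi l.
Proof.
move=> hphi; rewrite /apply.
transitivity (\sum_(l < k.+1) 'C(k, l)%:R *
   \sum_(y : tp k) T k l (gamma M (k - l) psi) x y * phi y).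
  under eq_bigr => y _ do rewrite big_distrl /=.
  rewrite exchange_big /=; apply: eq_bigr => l _.
  by rewrite big_distrr /=; apply: eq_bigr => y _; ring.
rewrite big_distrr /=; apply: eq_bigr => l _.
have lk : (l <= k)%N by rewrite -ltnS ltn_ord.
set G := gamma M (k - l) psi.
transitivity ('C(k, l)%:R * ((k`!)%:R / ((k - l)`!)%:R *
   \sum_(a : tp k) \sum_(b : tp k) sym k x a * tensI l G a b * phi b)).
  congr (_ * _); rewrite /T /Defs.comp.
  transitivity ((k`!)%:R / ((k - l)`!)%:R * \sum_(a : tp k) \sum_(b : tp k)
     sym k x a * tensI l G a b * \sum_(y : tp k) sym k b y * phi y).
    rewrite big_distrr /=.
    transitivity (\sum_(y : tp k) \sum_(a : tp k) \sum_(b : tp k)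
       (k`!)%:R / ((k - l)`!)%:R * (sym k x a * tensI l G a b * (sym k b y * phi y))).
      apply: eq_bigr => y _; rewrite big_distrr big_distrl /=; apply: eq_bigr => a _.
      rewrite big_distrr big_distrr big_distrl /=; apply: eq_bigr => b _; ring.
    rewrite exchange_big /=; apply: eq_bigr => a _.
    rewrite exchange_big big_distrr /=; apply: eq_bigr => b _.
    rewrite big_distrr big_distrr /=; apply: eq_bigr => y _; ring.
  congr (_ * _); apply: eq_bigr => a _; apply: eq_bigr => b _.
  by rewrite (symH_eq hphi).
rewrite /G KEY //.
have nz : ((k - l)`!)%:R != 0 :> algC by rewrite pnatr_eq0 -lt0n fact_gt0.
rewrite -(bin_ffact M (k - l)) !natrM.
by field.
Qed.

End S6.

Unset Implicit Arguments.

Theorem mainTheorem5 (N M k : nat) (hN : (2 <= N)%N) (hM : (1 <= M)%N) :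
  exists C : 'I_k.+1 -> algC,
    (forall l, 0 < C l) /\
    forall psi : vect N, unitH M psi ->
    forall phi : vect N, symH k phi ->
    forall x : k.-tuple 'I_N,
      apply k (W M k (proj psi)) phi x =
      apply k (fun u v => \sum_(l < k.+1) C l * T k l (gamma M (k - l) psi) u v) phi x.
Proof.
exists (fun l => ('C(k, l))%:R); split.
  by move=> l; rewrite ltr0n bin_gt0 -ltnS ltn_ord.
move=> psi [hpsi _] phi hphi x.
by rewrite LHS_eq // RHS_eq.
Qed.
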